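(* Under Assumption 1, for any choice of admissible input shares $a=(a_i)_{i\in M}$ and productivities $\lambda_i(a_i)>0$, the economy $\mathcal{E}(\lambda,a)$ has a general equilibrium, unique up to price normalization. Normalizing $p_0=1$: (1) the equilibrium revenues $\bar v_i:=\bar p_i\bar y_i$ ($i\in M$) satisfy $\begin{pmatrix}1\\ \bar v\end{pmatrix}=\tilde A\begin{pmatrix}1\\ \bar v\end{pmatrix}$, i.e. for all $j\in M$, $\bar v_j=a_{0,j}+a_{0,j}\sum_{i\in M}\varepsilon_i\bar v_i+\sum_{i\in M}a_{i,j}\bar v_i$, and $\sum_{i\in M}a_{i,0}\bar v_i=1$; (2) equilibrium profits are $\bar\pi_i=(1-\sum_{j\in N}a_{i,j})\bar v_i=(1-\sum_\ell b_{i,\ell})\bar v_i$; (3) equilibrium prices satisfy $\log(\bar p)=(A-I)^{-1}u+(A-I)^{-1}D\log(\bar v)$, where $\log(\bar p)$, $\log(\bar v)$ are taken coordinatewise over $M$, $u_i=\log\lambda_i(a_i)+\sum_{j\in N}a_{i,j}\log a_{i,j}$ (with $0\log 0=0$), and $D=\mathrm{diag}\big(\sum_{j\in N}a_{i,j}-1\big)_{i\in M}$.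
   Context: Economy: a representative household indexed $0$ and firms $M=\{1,\dots,m\}$; $N=M\cup\{0\}$, where index $0$ also denotes the labor good. Sectors: labor is sector $0$ with $M_0=\{0\}$; $M_\ell$ is the set of firms of sector $\ell$. The household supplies one unit of labor, receives all firms' profits, and has utility $u(x_0)=\prod_{j\in M}x_{0,j}^{a_{0,j}}$ with $a_0\in\mathbb{R}^M_+$, $\sum_j a_{0,j}=1$. Each firm $i$ has requirement vector $b_i\ge0$, $\sum_\ell b_{i,\ell}\le1$, and input shares $a_i\in\mathbb{R}^N_+$ with $\sum_{j\in M_\ell}a_{i,j}=b_{i,\ell}$ for every sector $\ell$; its production function is $f_{a,i}(x_i)=\lambda_i(a_i)\prod_{j\in N}x_{i,j}^{a_{i,j}}$. $\varepsilon_i:=1-\sum_{j\in N}a_{i,j}$. $A=(a_{i,j})_{i,j\in M}$. The economy $\mathcal{E}(\lambda,a)$: a general equilibrium is $(\bar p,\bar x,\bar y)$ with $\bar p\in\mathbb{R}^N_+$, $\bar y_0=1$, such that each firm $i$ maximizes $\bar p_iy_i-\bar p\cdot x_i$ subject to $y_i=f_{a,i}(x_i)$; the household maximizes $u(x_0)$ subject to $\bar p\cdot x_0\le \bar p_0+\sum_{j\in M}(\bar p_j\bar y_j-\bar p\cdot\bar x_j)$; and markets clear: $\sum_{j\in N}\bar x_{j,i}=\bar y_i$ for all $i\in N$. The matrix $\tilde A$ on $N\times N$: $\tilde A_{0,0}=0$, $\tilde A_{0,j}=a_{j,0}$, $\tilde A_{i,0}=a_{0,i}$, $\tilde A_{i,j}=a_{j,i}+\varepsilon_ja_{0,i}$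 ($i,j\in M$). Assumption 1: $a_0\in\mathbb{R}^M_{++}$; $b_{i,0}>0$ for all $i$; some firm $i_0$ has $b_{i_0,\ell}>0$ for some sector $\ell\ne0$. *)

(* Defs.v *)
From HB Require Import structures.
From mathcomp Require Import all_boot all_order all_algebra.
From mathcomp Require Import reals exp.
Set Implicit Arguments. Unset Strict Implicit. Unset Printing Implicit Defensive.
Import Order.TTheory GRing.Theory Num.Theory.
Local Open Scope ring_scope.

(* Firms are indexed by 'I_m (firm i of the paper is i+1).
   Goods (= the index set N) are indexed by 'I_m.+1 : good [lab] = ord0 is
   labor (index 0), good [gd i] = lift ord0 i is the product of firm i.
   Non-labor sectors are indexed by 'I_k; [sec j] is the sector of firm j
   (labor sector 0 = {0} is treated separately).
   a0 : 'I_m -> R            household Cobb-Douglas shares a_{0,j}, j in M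
   a  : 'I_m -> 'I_m.+1 -> R  input shares a_{i,j}, j in N
   b0 : 'I_m -> R            labor requirement b_{i,0}
   b  : 'I_m -> 'I_k -> R    sector requirements b_{i,l}, l <> 0
   lam : 'I_m -> ('I_m.+1 -> R) -> R   productivity functions lambda_i(.) *)

Definition lab {m : nat} : 'I_m.+1 := ord0.
Definition gd {m : nat} (i : 'I_m) : 'I_m.+1 := lift ord0 i.

Section Economy.
Variables (R : realType) (m k : nat).

Definition dotp (p z : 'I_m.+1 -> R) : R := \sum_(j < m.+1) p j * z j.

Definition prodfun (a : 'I_m -> 'I_m.+1 -> R) (lam : 'I_m -> ('I_m.+1 -> R) -> R)
  (i : 'I_m) (z : 'I_m.+1 -> R) : R :=
  lam i (a i) * \prod_(j < m.+1) powR (z j) (a i j).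

Definition utility (a0 : 'I_m -> R) (z : 'I_m.+1 -> R) : R :=
  \prod_(j < m) powR (z (gd j)) (a0 j).

Definition nonneg (z : 'I_m.+1 -> R) : Prop := forall j, 0 <= z j.

Definition profit (p : 'I_m.+1 -> R) (i : 'I_m) (yi : R) (xi : 'I_m.+1 -> R) : R :=
  p (gd i) * yi - dotp p xi.

Definition admissible (sec : 'I_m -> 'I_k) (a : 'I_m -> 'I_m.+1 -> R)
  (b0 : 'I_m -> R) (b : 'I_m -> 'I_k -> R) : Prop :=
  [/\ forall i j, 0 <= a i j,
      forall i, 0 <= b0 i /\ forall l, 0 <= b i l,
      forall i, b0 i + \sum_(l < k) b i l <= 1,
      forall i, a i lab = b0 i &
      forall i l, \sum_(j < m | sec j == l) a i (gd j) = b i l].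

Definition assumption1 (a0 : 'I_m -> R) (b0 : 'I_m -> R) (b : 'I_m -> 'I_k -> R) : Prop :=
  [/\ (forall j, 0 < a0 j), \sum_(j < m) a0 j = 1,
      (forall i, 0 < b0 i) & exists i0 l, 0 < b i0 l].

(* General equilibrium (p, x, y) of E(lambda, a):
   p : prices of goods in N; x0 : household bundle; x i : input bundle of firm i;
   y i : output of firm i (household labor supply y_0 = 1). *)
Definition equilibrium (a0 : 'I_m -> R) (a : 'I_m -> 'I_m.+1 -> R)
  (lam : 'I_m -> ('I_m.+1 -> R) -> R)
  (p : 'I_m.+1 -> R) (x0 : 'I_m.+1 -> R) (x : 'I_m -> 'I_m.+1 -> R) (y : 'I_m -> R) : Prop :=
  [/\ nonneg p /\ nonneg x0 /\ (forall i, nonneg (x i)),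
      (forall i, y i = prodfun a lam i (x i)) /\
      (forall i (z : 'I_m.+1 -> R), nonneg z ->
          profit p i (prodfun a lam i z) z <= profit p i (y i) (x i)),
      (let income := p lab + \sum_(i < m) profit p i (y i) (x i) in
       dotp p x0 <= income /\
       forall z, nonneg z -> dotp p z <= income -> utility a0 z <= utility a0 x0) &
      x0 lab + \sum_(i < m) x i lab = 1 /\
      forall j, x0 (gd j) + \sum_(i < m) x i (gd j) = y j].

Definition xlnx (t : R) : R := if t == 0 then 0 else t * ln t.

End Economy.

(* Main.v *)
Require Import Defs.
From HB Require Import structures.
From mathcomp Require Import all_boot all_order all_algebra.
From mathcomp Require Import reals exp sequences.
From mathcomp Require Import ring lra.
From Stdlib Require Import FunctionalExtensionality.
Import Order.TTheory GRing.Theory Num.Theory.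
Local Open Scope ring_scope.

Section Analytic.
Variable R : realType.
Implicit Types x y z r t : R.

Lemma powE z c : (0 < z) \/ c = 0 -> powR z c = expR (c * ln z).
Proof.
rewrite /powR; case: eqP => [->|_ _]; last by [].
case=> [|->]; first by rewrite ltxx.
by rewrite eqxx mul0r expR0.
Qed.

Lemma ln_le x : 0 < x -> ln x <= x - 1.
Proof.
move=> x0; have := @le_ln1Dx R (x - 1); have -> : 1 + (x - 1) = x by ring.
by apply; lra.
Qed.

Lemma ln_lt x : 0 < x -> x != 1 -> ln x < x - 1.
Proof.
move=> x0 x1; have h : ln x != 0 by rewrite ln_eq0.
have := expR_gt1Dx h; rewrite lnK ?posrE //; lra.
Qed.

Lemma powR_lb c r : 0 <= c -> 0 < r -> 1 + c * (1 - r^-1) <= powR r c.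
Proof.
move=> c0 r0; rewrite powE; last by left.
apply: le_trans (expR_ge1Dx _); rewrite lerD2l ler_wpM2l //.
have := @ln_le r^-1; rewrite invr_gt0 => /(_ r0).
by rewrite lnV ?posrE //; lra.
Qed.

Lemma foc c v w : 0 <= c -> 0 <= v ->
  (forall r, 0 < r -> v * (powR r c - 1) <= w * (r - 1)) -> c * v = w.
Proof.
move=> c0 v0 H.
have K : forall r, 0 < r -> c * v * (r - 1) <= w * r * (r - 1).
  move=> r r0; have h1 := @powR_lb c r c0 r0.
  have h2 : v * (c * (1 - r^-1)) <= w * (r - 1).
    apply: le_trans (H r r0); rewrite ler_wpM2l //; lra.
  have -> : c * v * (r - 1) = v * (c * (1 - r^-1)) * r.
    by field; rewrite gt_eqF.
  have -> : w * r * (r - 1) = w * (r - 1) * r by ring.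
  by rewrite ler_wpM2r // ltW.
have hw : 0 < `|w| + 1 by rewrite ltr_wpDl.
have nw := ler_norm w; have nw' := ler_normr w.
apply/eqP; rewrite eq_le; apply/andP; split.
- apply/ler_addgt0Pr => e e0.
  pose d := e / (`|w| + 1).
  have d0 : 0 < d by rewrite /d divr_gt0.
  have hd : `|w| * d <= e.
    rewrite /d mulrA ler_pdivrMr //; nra.
  have := K (1 + d); rewrite addrC addrK => /(_ ltac:(lra)).
  rewrite ler_pM2r // => h.
  have : w * d <= `|w| * d by rewrite ler_wpM2r //; lra.
  nra.
- apply/ler_addgt0Pr => e e0.
  pose d := e / (`|w| + 1).
  have d0 : 0 < d by rewrite /d divr_gt0.
  have hd : `|w| * d <= e.
    rewrite /d mulrA ler_pdivrMr //; nra.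
  pose r := (1 + d)^-1.
  have r0 : 0 < r by rewrite /r invr_gt0; lra.
  have r1 : r < 1 by rewrite /r invf_lt1; lra.
  have rd : 1 - r = d * r by rewrite /r; field; lra.
  have := K r r0.
  have -> : c * v * (r - 1) = - (c * v) * (1 - r) by ring.
  have -> : w * r * (r - 1) = - (w * r) * (1 - r) by ring.
  rewrite ler_pM2r ?subr_gt0 // lerN2 => h.
  have h3 : w * (1 - r) <= `|w| * (1 - r) by rewrite ler_wpM2r //; lra.
  have h4 : `|w| * (1 - r) <= `|w| * d.
    rewrite rd ler_wpM2l ?normr_ge0 // ger_pMr //; lra.
  have : w = w * r + w * (1 - r) by ring.
  lra.
Qed.

Lemma gamgm n (w : 'I_n -> R) (e : R) (t : 'I_n -> R) :
  (forall j, 0 <= w j) -> 0 <= e -> \sum_j w j + e = 1 ->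
  (forall j, 0 < w j -> 0 < t j) -> 0 < \sum_j w j * t j + e ->
  \sum_j w j * ln (t j) <= ln (\sum_j w j * t j + e).
Proof.
move=> w0 e0 sw tp; set M := (X in ln X) => M0.
have H : forall j, w j * ln (t j) <= w j * ln M + (w j * t j / M - w j).
  move=> j; have [->|wn] := eqVneq (w j) 0; first by rewrite !mul0r subr0 addr0.
  have wp : 0 < w j by rewrite lt_def wn w0.
  have tj := tp j wp.
  have : ln (t j / M) <= t j / M - 1 by apply: ln_le; rewrite divr_gt0.
  rewrite ln_div ?posrE // => h.
  have -> : w j * t j / M - w j = w j * (t j / M - 1) by rewrite mulrBr mulr1 mulrA.
  have := ler_wpM2l (ltW wp) h; rewrite mulrBr; lra.
have S : \sum_j w j * ln (t j) <= \sum_j (w j * ln M + (w j * t j / M - w j)) by apply: ler_sum => j _; exact: H.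
rewrite big_split /= sumrB -mulr_suml -mulr_suml in S.
have he : - (e * ln M) <= e * (M^-1 - 1).
  rewrite -mulrN -lnV ?posrE // ler_wpM2l //.
  by have := @ln_le M^-1; rewrite invr_gt0 => /(_ M0).
have hX : (\sum_i w i * t i) / M = 1 - e * M^-1.
  have -> : \sum_i w i * t i = M - e by rewrite /M addrK.
  by field; rewrite gt_eqF.
have hW : \sum_i w i = 1 - e by lra.
rewrite hX hW in S.
move: S he; set L := \sum_i _; set a := ln M; set b := e * M^-1.
have -> : (1 - e) * a = a - e * a by ring.
have -> : e * (M^-1 - 1) = b - e by rewrite /b; ring.
lra.
Qed.

Lemma amgm_eq n (w : 'I_n -> R) (t : 'I_n -> R) (d : R) :
  (forall j, 0 < w j) -> (forall j, 0 < t j) -> \sum_j w j = 1 ->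
  0 <= \sum_j w j * ln (t j) -> \sum_j w j * t j + d <= 1 -> 0 <= d ->
  (forall j, t j = 1) /\ d = 0.
Proof.
move=> wp tp sw sl st d0.
have T : forall j, 0 <= w j * (t j - 1 - ln (t j)).
  by move=> j; apply: mulr_ge0; [exact: ltW | have := @ln_le _ (tp j); lra].
have E : \sum_j w j * (t j - 1 - ln (t j)) =
   \sum_j w j * t j - \sum_j w j - \sum_j w j * ln (t j).
  rewrite -sumrB -sumrB; apply: eq_bigr => j _; ring.
have S0 : 0 <= \sum_j w j * (t j - 1 - ln (t j)) by apply: sumr_ge0 => j _.
have dz : d = 0 by lra.
split=> // j.
have Z : \sum_j w j * (t j - 1 - ln (t j)) = 0 by lra.
have := psumr_eq0P (fun j _ => T j) Z (i:=j) isT.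
move/eqP; rewrite mulf_eq0 gt_eqF //= => /eqP h.
apply/eqP; apply: contraT => tn; have := @ln_lt _ (tp j) tn; lra.
Qed.

Lemma unbounded (K c T : R) : 0 < K -> 0 < c -> exists2 r, 0 <= r & T < K * powR r c.
Proof.
move=> K0 c0; exists (powR ((`|T| + 1) / K) c^-1); first exact: powR_ge0.
rewrite -powRrM mulVf ?gt_eqF // powRr1; last first.
  by rewrite divr_ge0 // ?ltW // ltr_wpDl.
rewrite mulrCA divff ?gt_eqF // mulr1; have := ler_norm T; lra.
Qed.
End Analytic.

Definition ext {R : Type} {m : nat} (f0 : R) (f : 'I_m -> R) : 'I_m.+1 -> R :=
  fun l => match unlift ord0 l with Some l' => f l' | None => f0 end.
Lemma ext_lab {R : Type} {m : nat} (f0 : R) (f : 'I_m -> R) : ext f0 f lab = f0.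
Proof. by rewrite /ext unlift_none. Qed.
Lemma ext_gd {R : Type} {m : nat} (f0 : R) (f : 'I_m -> R) j : ext f0 f (gd j) = f j.
Proof. by rewrite /ext /gd liftK. Qed.

Definition upd {R : Type} {n : nat} (z : 'I_n -> R) j0 t : 'I_n -> R :=
  fun l => if l == j0 then t else z l.

Section BigUpd.
Variable R : realType.
Lemma prod_upd n (F : 'I_n -> R -> R) (z : 'I_n -> R) j0 t :
  \prod_l F l (upd z j0 t l) = F j0 t * \prod_(l | l != j0) F l (z l).
Proof.
rewrite (bigD1 j0) //= /upd eqxx; congr (_ * _).
by apply: eq_bigr => l /negPf ->.
Qed.
Lemma sum_upd n (F : 'I_n -> R -> R) (z : 'I_n -> R) j0 t :
  \sum_l F l (upd z j0 t l) = F j0 t + \sum_(l | l != j0) F l (z l).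
Proof.
rewrite (bigD1 j0) //= /upd eqxx; congr (_ + _).
by apply: eq_bigr => l /negPf ->.
Qed.
End BigUpd.

Section Econ.
Variables (R : realType) (m k : nat) (sec : 'I_m -> 'I_k)
  (a0 : 'I_m -> R) (a : 'I_m -> 'I_m.+1 -> R) (b0 : 'I_m -> R) (b : 'I_m -> 'I_k -> R)
  (lam : 'I_m -> ('I_m.+1 -> R) -> R).
Hypothesis HA1 : assumption1 a0 b0 b.
Hypothesis HAd : admissible sec a b0 b.
Hypothesis Hlam : forall i, 0 < lam i (a i).

Lemma a0_pos j : 0 < a0 j. Proof. by case: HA1. Qed.
Lemma a0_sum : \sum_j a0 j = 1. Proof. by case: HA1. Qed.
Lemma a_ge0 i j : 0 <= a i j. Proof. by case: HAd. Qed.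
Lemma alab i : a i lab = b0 i. Proof. by case: HAd. Qed.
Lemma alab_pos i : 0 < a i lab. Proof. by rewrite alab; case: HA1. Qed.

Definition s i := \sum_(j < m.+1) a i j.
Lemma s_split i : s i = a i lab + \sum_(j < m) a i (gd j).
Proof. by rewrite /s big_ord_recl. Qed.
Lemma s_b i : s i = b0 i + \sum_(l < k) b i l.
Proof.
rewrite s_split alab; congr (_ + _).
rewrite (partition_big sec predT) //=; apply: eq_bigr => l _.
by case: HAd => _ _ _ _ ->.
Qed.
Lemma s_le1 i : s i <= 1. Proof. by rewrite s_b; case: HAd. Qed.
Lemma s_ge0 i : 0 <= s i. Proof. by apply: sumr_ge0 => j _; exact: a_ge0. Qed.
Lemma sgd_le i : \sum_(j < m) a i (gd j) <= 1 - a i lab.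
Proof. have := s_le1 i; rewrite s_split; lra. Qed.

Lemma dotpE (p z : 'I_m.+1 -> R) :
  dotp p z = p lab * z lab + \sum_(j < m) p (gd j) * z (gd j).
Proof. by rewrite /dotp big_ord_recl. Qed.

Lemma prodfun_ge0 i z : 0 <= prodfun a lam i z.
Proof.
apply: mulr_ge0; first exact: ltW.
by apply: prodr_ge0 => j _; exact: powR_ge0.
Qed.

Lemma utility_ge0 z : 0 <= utility a0 z.
Proof. by apply: prodr_ge0 => j _; exact: powR_ge0. Qed.

Definition inc p (x : 'I_m -> 'I_m.+1 -> R) y :=
  p lab + \sum_(i < m) profit p i (y i) (x i).

Lemma prodfun0 i : prodfun a lam i (fun _ => 0) = 0.
Proof.
have h := alab_pos i; rewrite /lab in h.
by rewrite /prodfun big_ord_recl powR0 ?gt_eqF // mul0r mulr0.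
Qed.

Lemma ord_cases (P : 'I_m.+1 -> Prop) : P lab -> (forall j, P (gd j)) -> forall l, P l.
Proof. by move=> h1 h2 l; case: (unliftP ord0 l) => [j ->|->]; [exact: h2|exact: h1]. Qed.

Lemma util_exp z : (forall j, 0 < z (gd j)) ->
  utility a0 z = expR (\sum_j a0 j * ln (z (gd j))).
Proof.
move=> zp; rewrite expR_sum /utility; apply: eq_bigr => j _.
by rewrite powE //; left.
Qed.

Section Eq.
Variables (p x0 : 'I_m.+1 -> R) (x : 'I_m -> 'I_m.+1 -> R) (y : 'I_m -> R).
Hypothesis Heq : equilibrium a0 a lam p x0 x y.

Lemma eq_pnn j : 0 <= p j. Proof. by case: Heq => [[H _] _ _ _]. Qed.
Lemma eq_x0nn j : 0 <= x0 j. Proof. by case: Heq => [[_ [H _]] _ _ _]. Qed.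
Lemma eq_xnn i j : 0 <= x i j. Proof. by case: Heq => [[_ [_ H]] _ _ _]; apply: H. Qed.
Lemma eq_y i : y i = prodfun a lam i (x i). Proof. by case: Heq => [_ [H _] _ _]. Qed.
Lemma eq_firm i z : nonneg z ->
  profit p i (prodfun a lam i z) z <= profit p i (y i) (x i).
Proof. by case: Heq => [_ [_ H] _ _]; apply: H. Qed.
Lemma eq_bud : dotp p x0 <= inc p x y. Proof. by case: Heq => [_ _ [H _] _]. Qed.
Lemma eq_hh z : nonneg z -> dotp p z <= inc p x y -> utility a0 z <= utility a0 x0.
Proof. by case: Heq => [_ _ [_ H] _]; apply: H. Qed.
Lemma eq_lab : x0 lab + \sum_i x i lab = 1. Proof. by case: Heq => [_ _ _ [H _]]. Qed.
Lemma eq_good j : x0 (gd j) + \sum_i x i (gd j) = y j.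
Proof. by case: Heq => [_ _ _ [_ H]]. Qed.

Lemma profit_ge0 i : 0 <= profit p i (y i) (x i).
Proof.
have := @eq_firm i (fun _ => 0) (fun _ => lexx 0).
by rewrite /profit prodfun0 /dotp big1 ?mulr0 ?subr0 // => j _; rewrite mulr0.
Qed.

Lemma plab_pos : 0 < p lab.
Proof.
rewrite lt_def eq_pnn andbT; apply/eqP => p0.
have pg : forall i, p (gd i) = 0.
  move=> i; apply/eqP; rewrite eq_le eq_pnn andbT; apply/negP => /negP.
  rewrite -ltNge => pi.
  pose K0 := \sum_(l | l != lab) p l * 1.
  have [r r0 hr] := @unbounded R _ _ (profit p i (y i) (x i) + K0)
     (mulr_gt0 pi (Hlam i)) (alab_pos i).
  have hn : nonneg (upd (fun _ => (1 : R)) (lab : 'I_m.+1) r).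
    by rewrite /nonneg /upd => l; case: (l == lab) => //=; exact: ler01.
  have := @eq_firm i _ hn.
  rewrite /profit /dotp (@sum_upd R _ (fun l v => p l * v)) /prodfun.
  rewrite (@prod_upd R _ (fun l v => powR v (a i l))) big1 ?mulr1; last first.
    by move=> l _; rewrite powR1.
  rewrite p0 mul0r add0r -/K0 -/(dotp p (x i)) mulrA.
  move: hr; set U := powR r _; set Q := profit _ _ _ _; rewrite /Q /profit.
  lra.
have pz : forall l, p l = 0 by apply: ord_cases.
have i0 : inc p x y = 0.
  rewrite /inc p0 add0r big1 // => i _.
  by rewrite /profit /dotp pz mul0r big1 ?subrr // => l _; rewrite pz mul0r.
pose c := utility a0 x0 + 1.
have c0 : 0 < c by rewrite /c ltr_wpDl ?utility_ge0.
have := @eq_hh (fun _ => c) (fun _ => ltW c0).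
rewrite i0 /dotp big1 ?lexx; last by move=> l _; rewrite pz mul0r.
move=> /(_ isT); rewrite util_exp // -mulr_suml a0_sum mul1r lnK ?posrE //.
rewrite /c; lra.
Qed.

Lemma inc_ge : p lab <= inc p x y.
Proof. by rewrite /inc lerDl; apply: sumr_ge0 => i _; exact: profit_ge0. Qed.

Lemma inc_pos : 0 < inc p x y.
Proof. exact: lt_le_trans plab_pos inc_ge. Qed.

Lemma p_gd_pos j : 0 < p (gd j).
Proof.
rewrite lt_def eq_pnn andbT; apply/eqP => pj0.
set I := inc p x y; have I0 : 0 < I := inc_pos.
pose f := fun l : 'I_m => a0 l * I / (p (gd l) + 1).
have pp : forall l, 0 < p (gd l) + 1 by move=> l; rewrite ltr_wpDl ?eq_pnn.
have fp : forall l, 0 < f l.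
  by move=> l; rewrite /f divr_gt0 // mulr_gt0 // a0_pos.
pose K := \prod_(l | l != j) powR (f l) (a0 l).
have K0 : 0 < K by apply: prodr_gt0 => l _; exact: powR_gt0.
have [r r0 hr] := @unbounded R K (a0 j) (utility a0 x0) K0 (a0_pos j).
pose z := ext 0 (upd f j r).
have hn : nonneg z.
  apply: ord_cases; first by rewrite /z ext_lab.
  move=> l; rewrite /z ext_gd /upd; case: (l == j) => //; exact: ltW.
have hb : dotp p z <= I.
  rewrite dotpE /z ext_lab mulr0 add0r.
  apply: le_trans (_ : _ <= \sum_l a0 l * I) _; last first.
    by rewrite -mulr_suml a0_sum mul1r.
  apply: ler_sum => l _; rewrite ext_gd /upd; case: eqP => [->|_].
    by rewrite pj0 mul0r mulr_ge0 // ltW // a0_pos.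
  have h1 : p (gd l) / (p (gd l) + 1) <= 1.
    by rewrite ler_pdivrMr // mul1r lerDl.
  have -> : p (gd l) * f l = a0 l * I * (p (gd l) / (p (gd l) + 1)).
    by rewrite /f; field; rewrite gt_eqF.
  by rewrite ler_piMr // mulr_ge0 // ltW // a0_pos.
have := @eq_hh z hn hb.
rewrite /utility.
under eq_bigr do rewrite /z ext_gd.
rewrite (@prod_upd R _ (fun l v => powR v (a0 l))) -/K mulrC.
rewrite /utility in hr; lra.
Qed.

Lemma firm_foc i j : p j * x i j = a i j * (p (gd i) * y i).
Proof.
pose K := lam i (a i) * \prod_(l | l != j) powR (x i l) (a i l).
have yK : forall t, prodfun a lam i (upd (x i) j t) = powR t (a i j) * K.
  by move=> t; rewrite /prodfun (@prod_upd R _ (fun l v => powR v (a i l))) /K; ring.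
have yE : y i = powR (x i j) (a i j) * K.
  by rewrite eq_y /prodfun (bigD1 j) //= /K; ring.
have v0 : 0 <= p (gd i) * y i by rewrite mulr_ge0 ?eq_pnn // eq_y prodfun_ge0.
have [xz|xn] := eqVneq (x i j) 0.
  rewrite xz mulr0; have [->|an] := eqVneq (a i j) 0; first by rewrite mul0r.
  by rewrite yE xz powR0 // mul0r mulr0 mulr0.
have xp : 0 < x i j by rewrite lt_def xn eq_xnn.
symmetry; apply: foc; [exact: a_ge0 | exact: v0 | move=> r r0].
have hn : nonneg (upd (x i) j (r * x i j)).
  rewrite /nonneg /upd => l; case: (l == j) => /=; last exact: eq_xnn.
  by rewrite mulr_ge0 // ltW.
have := @eq_firm i _ hn.
rewrite /profit yK /dotp (@sum_upd R _ (fun l v => p l * v)) [in X in _ <= X](bigD1 j) //=.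
rewrite powRM ?(ltW r0) ?eq_xnn //.
have e1 : p (gd i) * (powR r (a i j) * powR (x i j) (a i j) * K) =
   powR r (a i j) * (p (gd i) * y i) by rewrite yE; ring.
have e2 : p j * (r * x i j) = r * (p j * x i j) by ring.
rewrite e1 e2.
have -> : p (gd i) * y i * (powR r (a i j) - 1) =
   powR r (a i j) * (p (gd i) * y i) - p (gd i) * y i by ring.
have -> : p j * x i j * (r - 1) = r * (p j * x i j) - p j * x i j by ring.
lra.
Qed.

Lemma hh_demand :
  x0 lab = 0 /\ forall j, p (gd j) * x0 (gd j) = a0 j * inc p x y.
Proof.
set I := inc p x y; have I0 : 0 < I := inc_pos.
have pp := p_gd_pos; have pl := plab_pos.
pose zs := ext 0 (fun l => a0 l * I / p (gd l)).
have zsE : forall l, zs (gd l) = a0 l * I / p (gd l) by move=> l; rewrite /zs ext_gd.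
have zsp : forall l, 0 < zs (gd l).
  by move=> l; rewrite zsE divr_gt0 // mulr_gt0 // a0_pos.
have hn : nonneg zs.
  by apply: ord_cases; [rewrite /zs ext_lab | move=> l; exact: ltW].
have hb : dotp p zs <= I.
  rewrite dotpE /zs ext_lab mulr0 add0r.
  under eq_bigr do rewrite ext_gd.
  have -> : \sum_l p (gd l) * (a0 l * I / p (gd l)) = \sum_l a0 l * I.
    by apply: eq_bigr => l _; field; rewrite gt_eqF.
  by rewrite -mulr_suml a0_sum mul1r.
have hu := @eq_hh zs hn hb.
have x0p : forall l, 0 < x0 (gd l).
  move=> l; rewrite lt_def eq_x0nn andbT; apply/eqP => xz.
  move: hu; rewrite (util_exp zs zsp) /utility [X in _ <= X](bigD1 l) //= xz powR0 ?gt_eqF ?a0_pos //.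
  by rewrite mul0r; have := expR_gt0 (\sum_j a0 j * ln (zs (gd j))); lra.
rewrite (util_exp zs zsp) (util_exp x0 x0p) ler_expR in hu.
pose t := fun l => x0 (gd l) / zs (gd l).
have tp : forall l, 0 < t l by move=> l; rewrite divr_gt0.
have h1 : 0 <= \sum_j a0 j * ln (t j).
  have -> : \sum_j a0 j * ln (t j) =
     \sum_j a0 j * ln (x0 (gd j)) - \sum_j a0 j * ln (zs (gd j)).
    by rewrite -sumrB; apply: eq_bigr => j _; rewrite /t ln_div ?posrE // mulrBr.
  by rewrite subr_ge0.
have h2 : \sum_j a0 j * t j + p lab * x0 lab / I <= 1.
  have -> : \sum_j a0 j * t j = (\sum_j p (gd j) * x0 (gd j)) / I.
    rewrite mulr_suml; apply: eq_bigr => j _; rewrite /t zsE; field.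
    by rewrite !gt_eqF ?a0_pos.
  rewrite -mulrDl ler_pdivrMr // mul1r addrC -dotpE; exact: eq_bud.
have h3 : 0 <= p lab * x0 lab / I.
  by apply: divr_ge0; [apply: mulr_ge0; [exact: eq_pnn|exact: eq_x0nn] | exact: ltW].
have [t1 d0] := @amgm_eq R m a0 t (p lab * x0 lab / I) a0_pos tp a0_sum h1 h2 h3.
split.
  apply/eqP; move: d0 => /eqP; rewrite mulf_eq0 invr_eq0 (gt_eqF I0) orbF.
  by rewrite mulf_eq0 (gt_eqF pl).
move=> j; have := t1 j; rewrite /t => /divr1_eq ->.
by rewrite zsE; field; rewrite gt_eqF.
Qed.

Lemma y_ge0 i : 0 <= y i. Proof. by rewrite eq_y prodfun_ge0. Qed.

Lemma profit_eq i : profit p i (y i) (x i) = (1 - s i) * (p (gd i) * y i).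
Proof.
rewrite /profit /dotp.
under eq_bigr do rewrite firm_foc.
by rewrite -mulr_suml -/(s i) mulrBl mul1r.
Qed.

Lemma inc_eq : inc p x y = p lab + \sum_i (1 - s i) * (p (gd i) * y i).
Proof. by rewrite /inc; congr (_ + _); apply: eq_bigr => i _; rewrite profit_eq. Qed.

Lemma rev_eq j : p (gd j) * y j = a0 j * inc p x y + \sum_i a i (gd j) * (p (gd i) * y i).
Proof.
rewrite -eq_good mulrDr; case: hh_demand => _ ->; congr (_ + _).
by rewrite mulr_sumr; apply: eq_bigr => i _; rewrite firm_foc.
Qed.

Lemma lab_eq : \sum_i a i lab * (p (gd i) * y i) = p lab.
Proof.
have := congr1 (fun t => p lab * t) eq_lab; rewrite /= mulr1 mulrDr.
case: hh_demand => -> _; rewrite mulr0 add0r mulr_sumr => <-.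
by apply: eq_bigr => i _; rewrite firm_foc.
Qed.

Lemma v_pos j : 0 < p (gd j) * y j.
Proof.
rewrite rev_eq; apply: lt_le_trans (_ : 0 < a0 j * inc p x y) _.
  by rewrite mulr_gt0 ?a0_pos ?inc_pos.
rewrite lerDl; apply: sumr_ge0 => i _; apply: mulr_ge0; first exact: a_ge0.
by rewrite mulr_ge0 ?eq_pnn ?y_ge0.
Qed.

End Eq.

Lemma ln_prodfun (p : 'I_m.+1 -> R) i (vi : R) (xi : 'I_m.+1 -> R) :
  (forall j, 0 < p j) -> 0 < vi -> (forall j, xi j = a i j * vi / p j) ->
  prodfun a lam i xi = expR (ln (lam i (a i)) + \sum_j xlnx (a i j) + s i * ln vi
                              - \sum_j a i j * ln (p j)).
Proof.
move=> pp v0 xE; rewrite /prodfun.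
have -> : \prod_j powR (xi j) (a i j) =
    \prod_j expR (xlnx (a i j) + a i j * ln vi - a i j * ln (p j)).
  apply: eq_bigr => j _; rewrite xE.
  have [->|an] := eqVneq (a i j) 0.
    by rewrite powRr0 /xlnx eqxx !mul0r addr0 subr0 expR0.
  have ap : 0 < a i j by rewrite lt_def an a_ge0.
  rewrite powE; last by left; rewrite divr_gt0 ?mulr_gt0.
  congr expR; rewrite /xlnx (negPf an) ln_div ?posrE ?mulr_gt0 // lnM ?posrE //; ring.
have e : lam i (a i) = expR (ln (lam i (a i))) by rewrite lnK ?posrE.
rewrite {1}e -expR_sum -expRD; congr expR.
rewrite !big_split /= sumrN -mulr_suml /s; ring.
Qed.

Lemma price_row p x0 x y : equilibrium a0 a lam p x0 x y -> forall i,
  \sum_(j < m) a i (gd j) * ln (p (gd j)) - ln (p (gd i)) =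
  ln (lam i (a i)) + \sum_j xlnx (a i j) + (s i - 1) * ln (p (gd i) * y i)
   - a i lab * ln (p lab).
Proof.
move=> Heq i.
have pp : forall j, 0 < p j by apply: ord_cases; [exact: (@plab_pos _ _ _ _ Heq) | exact: (@p_gd_pos _ _ _ _ Heq)].
have vp := @v_pos _ _ _ _ Heq i.
have xE : forall j, x i j = a i j * (p (gd i) * y i) / p j.
  by move=> j; rewrite -(@firm_foc _ _ _ _ Heq) mulrC mulKf ?gt_eqF.
have hy := @eq_y _ _ _ _ Heq i.
rewrite (@ln_prodfun p i _ _ pp vp xE) in hy.
have hv : ln (p (gd i) * y i) = ln (p (gd i)) + (ln (lam i (a i)) + \sum_j xlnx (a i j) +
   s i * ln (p (gd i) * y i) - \sum_j a i j * ln (p j)).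
  by rewrite {1}hy lnM ?posrE ?expR_gt0 // expRK.
have e2 : \sum_j a i j * ln (p j) =
   a i lab * ln (p lab) + \sum_(j < m) a i (gd j) * ln (p (gd j)) by rewrite big_ord_recl.
rewrite e2 in hv; move: hv.
set L := ln (p (gd i) * y i) => hv.
have -> : (s i - 1) * L = s i * L - L by ring.
lra.
Qed.

Lemma nonneg_sol (w : 'I_m -> R) :
  (forall j, \sum_i a i (gd j) * w i <= w j) -> forall j, 0 <= w j.
Proof.
move=> H.
pose n i := if w i < 0 then - w i else 0.
have n0 : forall i, 0 <= n i by move=> i; rewrite /n; case: ifP => //; lra.
have nw : forall i, - w i <= n i.
  by move=> i; rewrite /n; case: ifP => // /negbT; rewrite -leNgt; lra.
have Hn : forall j, n j <= \sum_i a i (gd j) * n i.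
  move=> j; rewrite /n; case: ifP => wj.
    apply: le_trans (_ : - \sum_i a i (gd j) * w i <= _); first by have := H j; lra.
    rewrite -sumrN; apply: ler_sum => i _; rewrite -mulrN; apply: ler_wpM2l.
      exact: a_ge0.
    exact: nw.
  by apply: sumr_ge0 => i _; apply: mulr_ge0; [exact: a_ge0 | exact: n0].
have S : \sum_j n j <= \sum_i (1 - a i lab) * n i.
  apply: le_trans (ler_sum _ (fun j _ => Hn j)) _.
  rewrite exchange_big /=; apply: ler_sum => i _; rewrite -mulr_suml.
  by apply: ler_wpM2r; [exact: n0 | exact: sgd_le].
have S2 : \sum_i (1 - a i lab) * n i = \sum_i n i - \sum_i a i lab * n i.
  by rewrite -sumrB; apply: eq_bigr => i _; ring.
have Z : \sum_i a i lab * n i = 0.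
  apply/eqP; rewrite eq_le; apply/andP; split; first lra.
  by apply: sumr_ge0 => i _; apply: mulr_ge0; [exact: ltW (alab_pos i) | exact: n0].
move=> j; have := psumr_eq0P (fun i _ => mulr_ge0 (ltW (alab_pos i)) (n0 i)) Z (i:=j) isT.
move/eqP; rewrite mulf_eq0 gt_eqF ?alab_pos //= /n; case: ifP => //.
by move=> _; rewrite oppr_eq0 => /eqP ->.
by move=> /negbT; rewrite -leNgt.
Qed.

Lemma kernel0 (v : 'rV[R]_m) : (forall j, v 0 j = \sum_i a i (gd j) * v 0 i) -> v = 0.
Proof.
move=> H; apply/rowP => j; rewrite mxE; apply/eqP; rewrite eq_le; apply/andP; split.
  have hn : forall l, \sum_i a i (gd l) * (- v 0 i) <= - v 0 l.
    by move=> l; rewrite H -sumrN; apply: ler_sum => i _; rewrite mulrN.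
  have := @nonneg_sol (fun i => - v 0 i) hn j; lra.
by apply: (@nonneg_sol (fun i => v 0 i)) => l; rewrite H.
Qed.

Definition Amx : 'M[R]_m := \matrix_(i, j) a i (gd j).

Lemma AmxE i j : Amx i j = a i (gd j). Proof. by rewrite /Amx mxE. Qed.

Lemma unitA : (Amx - 1%:M) \in unitmx.
Proof.
rewrite unitmxE unitfE; apply/negP => /det0P [v vn0 hv].
apply: (negP vn0); apply/eqP; apply: kernel0 => j.
rewrite mulmxBr mulmx1 in hv; move/rowP: hv => /(_ j); rewrite !mxE.
move/eqP; rewrite subr_eq0 => /eqP <-.
by apply: eq_bigr => i _; rewrite mxE mulrC.
Qed.

Lemma unitB : (1%:M - Amx) \in unitmx.
Proof.
rewrite unitmxE unitfE; apply/negP => /det0P [v vn0 hv].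
apply: (negP vn0); apply/eqP; apply: kernel0 => j.
rewrite mulmxBr mulmx1 in hv; move/rowP: hv => /(_ j); rewrite !mxE.
move/eqP; rewrite subr_eq0 => /eqP ->.
by apply: eq_bigr => i _; rewrite mxE mulrC.
Qed.

Lemma eq_scale p x0 x y c : 0 < c -> equilibrium a0 a lam p x0 x y ->
  equilibrium a0 a lam (fun j => c * p j) x0 x y.
Proof.
move=> c0 Heq.
have dE : forall z, dotp (fun j => c * p j) z = c * dotp p z.
  by move=> z; rewrite /dotp mulr_sumr; apply: eq_bigr => j _; rewrite mulrA.
have pE : forall i yi xi, profit (fun j => c * p j) i yi xi = c * profit p i yi xi.
  by move=> i yi xi; rewrite /profit dE; ring.
have iE : inc (fun j => c * p j) x y = c * inc p x y.
  by rewrite /inc mulrDr mulr_sumr; congr (_ + _); apply: eq_bigr => i _; rewrite pE.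
split.
- split; first by move=> j; rewrite mulr_ge0 ?(ltW c0) ?(@eq_pnn _ _ _ _ Heq).
  by split; [move=> j; exact: (@eq_x0nn _ _ _ _ Heq) | move=> i j; exact: (@eq_xnn _ _ _ _ Heq)].
- split; first by move=> i; exact: (@eq_y _ _ _ _ Heq).
  by move=> i z hz; rewrite !pE ler_pM2l //; exact: (@eq_firm _ _ _ _ Heq).
- change (dotp (fun j => c * p j) x0 <= inc (fun j => c * p j) x y /\
    forall z, nonneg z -> dotp (fun j => c * p j) z <= inc (fun j => c * p j) x y ->
      utility a0 z <= utility a0 x0).
  rewrite dE iE ler_pM2l //; split; first exact: (@eq_bud _ _ _ _ Heq).
  by move=> z hz; rewrite dE ler_pM2l //; exact: (@eq_hh _ _ _ _ Heq).
- by split; [exact: (@eq_lab _ _ _ _ Heq) | exact: (@eq_good _ _ _ _ Heq)].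
Qed.

Lemma props p x0 x y : equilibrium a0 a lam p x0 x y -> p lab = 1 ->
     let v := fun i : 'I_m => p (gd i) * y i in
     let eps := fun i : 'I_m => 1 - \sum_(j < m.+1) a i j in
     [/\ (forall j : 'I_m,
            v j = a0 j + a0 j * \sum_(i < m) eps i * v i + \sum_(i < m) a i (gd j) * v i)
         /\ \sum_(i < m) a i lab * v i = 1,
         (forall i : 'I_m,
            profit p i (y i) (x i) = (1 - \sum_(j < m.+1) a i j) * v i
            /\ profit p i (y i) (x i) = (1 - (b0 i + \sum_(l < k) b i l)) * v i) &
         let A : 'M[R]_m := \matrix_(i, j) a i (gd j) in
         let u : 'cV[R]_m :=
           \col_i (ln (lam i (a i)) + \sum_(j < m.+1) xlnx (a i j)) in
         let D : 'M[R]_m := diag_mx (\row_i (\sum_(j < m.+1) a i j - 1)) in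
         let logp : 'cV[R]_m := \col_i ln (p (gd i)) in
         let logv : 'cV[R]_m := \col_i ln (v i) in
         (A - 1%:M) \in unitmx /\
         logp = invmx (A - 1%:M) *m u + invmx (A - 1%:M) *m D *m logv].
Proof.
move=> Heq p1 v eps; split.
- split; last by rewrite -p1 -(@lab_eq _ _ _ _ Heq).
  move=> j; rewrite /v (@rev_eq _ _ _ _ Heq) (@inc_eq _ _ _ _ Heq) p1 mulrDr mulr1.
  by rewrite /eps /s.
- move=> i; rewrite (@profit_eq _ _ _ _ Heq); split; first by [].
  by rewrite -s_b.
- move=> A u D logp logv.
  have uA : (A - 1%:M) \in unitmx by exact: unitA.
  split; first exact: uA.
  have rowE : (A - 1%:M) *m logp = u + D *m logv.
    apply/colP => i; rewrite mulmxBl mul1mx mul_diag_mx !mxE.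
    have := @price_row _ _ _ _ Heq i; rewrite p1 ln1 mulr0 subr0 => <-.
    congr (_ - _); apply: eq_bigr => j _; by rewrite /A /logp !mxE.
  by rewrite -[logp](mulKmx uA) rowE mulmxDr mulmxA.
Qed.

Lemma uniq_part p x0 x y p' x0' x' y' :
  equilibrium a0 a lam p x0 x y -> equilibrium a0 a lam p' x0' x' y' ->
  exists2 c : R, 0 < c & [/\ forall j, p' j = c * p j, x0' = x0, x' = x & y' = y].
Proof.
move=> He He'.
have P0 := @plab_pos _ _ _ _ He; have P0' := @plab_pos _ _ _ _ He'.
pose q := fun j => (p lab)^-1 * p j; pose q' := fun j => (p' lab)^-1 * p' j.
have Hq : equilibrium a0 a lam q x0 x y.
  by apply: (@eq_scale p x0 x y _ _ He); rewrite invr_gt0.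
have Hq' : equilibrium a0 a lam q' x0' x' y'.
  by apply: (@eq_scale p' x0' x' y' _ _ He'); rewrite invr_gt0.
have q1 : q lab = 1 by rewrite /q mulVf ?gt_eqF.
have q1' : q' lab = 1 by rewrite /q' mulVf ?gt_eqF.
have qp := @p_gd_pos _ _ _ _ Hq; have qp' := @p_gd_pos _ _ _ _ Hq'.
set I := inc q x y; set I' := inc q' x' y'.
have I0 : 0 < I := @inc_pos _ _ _ _ Hq; have I0' : 0 < I' := @inc_pos _ _ _ _ Hq'.
pose vh i := q (gd i) * y i; pose vh' i := q' (gd i) * y' i.
have nE : forall j, vh j / I = a0 j + \sum_i a i (gd j) * (vh i / I).
  move=> j; rewrite /vh (@rev_eq _ _ _ _ Hq) -/I mulrDl mulfK ?gt_eqF //; congr (_ + _).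
  by rewrite mulr_suml; apply: eq_bigr => i _; ring.
have nE' : forall j, vh' j / I' = a0 j + \sum_i a i (gd j) * (vh' i / I').
  move=> j; rewrite /vh' (@rev_eq _ _ _ _ Hq') -/I' mulrDl mulfK ?gt_eqF //; congr (_ + _).
  by rewrite mulr_suml; apply: eq_bigr => i _; ring.
have d0 : forall j, vh j / I = vh' j / I'.
  have hk : forall l, (\row_i (vh i / I - vh' i / I')) 0 l =
      \sum_i a i (gd l) * (\row_i0 (vh i0 / I - vh' i0 / I')) 0 i.
    move=> l; rewrite !mxE nE nE'.
    rewrite (_ : \sum_i a i (gd l) * (\row_i0 (vh i0 / I - vh' i0 / I')) 0 i =
       \sum_i a i (gd l) * (vh i / I) - \sum_i a i (gd l) * (vh' i / I')).
      by ring.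
    by rewrite -sumrB; apply: eq_bigr => i _; rewrite mxE mulrBr.
  move=> j; have := @kernel0 _ hk.
  by move/rowP/(_ j); rewrite !mxE => /eqP; rewrite subr_eq0 => /eqP.
have L1 : I * \sum_i a i lab * (vh i / I) = 1.
  rewrite -q1 -(@lab_eq _ _ _ _ Hq) mulr_sumr; apply: eq_bigr => i _.
  by rewrite /vh; field; rewrite gt_eqF.
have L1' : I' * \sum_i a i lab * (vh' i / I') = 1.
  rewrite -q1' -(@lab_eq _ _ _ _ Hq') mulr_sumr; apply: eq_bigr => i _.
  by rewrite /vh'; field; rewrite gt_eqF.
have II : I = I'.
  have e : \sum_i a i lab * (vh i / I) = \sum_i a i lab * (vh' i / I').
    by apply: eq_bigr => i _; rewrite d0.
  rewrite e in L1; have := L1; rewrite -L1' => /eqP.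
  rewrite (inj_eq (mulIf _)) ?(eqP) //; last first.
    by apply/negP => /eqP h; move: L1'; rewrite h mulr0; lra.
  by move=> /eqP.
have vv : forall i, vh i = vh' i.
  by move=> i; have := d0 i; rewrite -II => /(mulIf (invr_neq0 (lt0r_neq0 I0))).
have qq : forall j, q j = q' j.
  apply: ord_cases; first by rewrite q1 q1'.
  have := @props _ _ _ _ Hq q1; have := @props _ _ _ _ Hq' q1'; cbv zeta.
  move=> [_ _ [_ L']] [_ _ [_ L]].
  have lv : \col_i ln (q (gd i) * y i) = \col_i ln (q' (gd i) * y' i) :> 'cV[R]_m.
    by apply/colP => i; rewrite !mxE; have := vv i; rewrite /vh /vh' => ->.
  rewrite lv -L' in L.
  move=> i; move/colP: L => /(_ i); rewrite !mxE.
  by move/ln_inj; apply; rewrite posrE.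
have yy : forall i, y' i = y i.
  move=> i; apply/esym; apply: (@mulfI _ (q' (gd i))); first by rewrite gt_eqF.
  by have := vv i; rewrite /vh /vh' qq.
have I1 : I = I' := II.
exists (p' lab / p lab); first by rewrite divr_gt0.
split.
- move=> j; have := qq j; rewrite /q /q' => h.
  have e : p' j = p' lab * ((p' lab)^-1 * p' j) by rewrite mulrA mulfV ?gt_eqF // mul1r.
  by rewrite e -h; ring.
- apply: functional_extensionality; apply: ord_cases.
    by case: (@hh_demand _ _ _ _ Hq) => ->; case: (@hh_demand _ _ _ _ Hq') => ->.
  move=> j; case: (@hh_demand _ _ _ _ Hq) => _ /(_ j).
  case: (@hh_demand _ _ _ _ Hq') => _ /(_ j).
  by rewrite -/I -/I' -I1 -qq => <- /(mulfI (lt0r_neq0 (qp j))) ->.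
- apply: functional_extensionality => i; apply: functional_extensionality => j.
  have := @firm_foc _ _ _ _ Hq i j; have := @firm_foc _ _ _ _ Hq' i j.
  rewrite -/(vh' i) -vv /vh -qq => h1 h2.
  have qn : q j != 0.
    by move: j {h1 h2}; apply: ord_cases; [rewrite q1 oner_neq0 | move=> j; rewrite gt_eqF].
  by apply: (@mulfI _ (q j)) => //; rewrite h1 h2.
- by apply: functional_extensionality => i; rewrite yy.
Qed.

Lemma some_j : exists j : 'I_m, True.
Proof.
case: (pickP (@predT 'I_m)) => [j _|h]; first by exists j.
by have := a0_sum; rewrite big_pred0 // => /eqP; rewrite eq_sym oner_eq0.
Qed.

Lemma sumr_ge_one n (F : 'I_n -> R) j0 : (forall j, 0 <= F j) -> F j0 <= \sum_j F j.
Proof.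
move=> F0; rewrite (bigD1 j0) //= lerDl; apply: sumr_ge0 => j _; exact: F0.
Qed.

Lemma firm_opt (p : 'I_m.+1 -> R) i (vi : R) (xi : 'I_m.+1 -> R) :
  (forall j, 0 < p j) -> 0 < vi -> (forall j, xi j = a i j * vi / p j) ->
  p (gd i) * prodfun a lam i xi = vi ->
  forall z, nonneg z -> profit p i (prodfun a lam i z) z <= profit p i (prodfun a lam i xi) xi.
Proof.
move=> pp v0 xE pv z zn.
have dx : dotp p xi = s i * vi.
  rewrite /dotp /s mulr_suml; apply: eq_bigr => j _; rewrite xE; field.
  by rewrite gt_eqF.
have dz0 : 0 <= dotp p z by apply: sumr_ge0 => j _; apply: mulr_ge0; [exact: ltW | exact: zn].
rewrite /profit pv dx.
have s1 := s_le1 i.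
case: (boolP [exists j, (0 < a i j) && (z j == 0)]) => [/existsP [j /andP [aj /eqP zj]]|hz].
  rewrite /prodfun (bigD1 j) //= zj powR0 ?gt_eqF // mul0r mulr0 mulr0 sub0r.
  have : 0 <= (1 - s i) * vi by apply: mulr_ge0; [rewrite subr_ge0 | exact: ltW].
  lra.
have zp : forall j, 0 < a i j -> 0 < z j.
  move=> j aj; rewrite lt_def zn andbT; apply/negP => zj.
  by move/existsP: hz; apply; exists j; rewrite aj zj.
have xp : forall j, 0 < a i j -> 0 < xi j.
  by move=> j aj; rewrite xE divr_gt0 ?mulr_gt0.
have pw : forall (w : 'I_m.+1 -> R), (forall j, 0 < a i j -> 0 < w j) ->
    prodfun a lam i w = lam i (a i) * expR (\sum_j a i j * ln (w j)).
  move=> w wp; rewrite /prodfun expR_sum; congr (_ * _); apply: eq_bigr => j _.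
  apply: powE; have [->|an] := eqVneq (a i j) 0; first by right.
  by left; apply: wp; rewrite lt_def an a_ge0.
pose t := fun j => p j * z j / (a i j * vi).
have tE : \sum_j a i j * ln (z j) = \sum_j a i j * ln (xi j) + \sum_j a i j * ln (t j).
  rewrite -big_split; apply: eq_bigr => j _ /=.
  have [->|an] := eqVneq (a i j) 0; first by rewrite !mul0r addr0.
  have aj : 0 < a i j by rewrite lt_def an a_ge0.
  rewrite -mulrDr -lnM ?posrE ?xp //; last first.
    by rewrite /t divr_gt0 ?mulr_gt0 ?zp.
  congr (_ * ln _); rewrite /t xE; field.
  by rewrite !gt_eqF ?mulr_gt0.
pose M := \sum_j a i j * t j + (1 - s i).
have tp : forall j, 0 < a i j -> 0 < t j.
  by move=> j aj; rewrite /t divr_gt0 ?mulr_gt0 ?zp.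
have M0 : 0 < M.
  apply: lt_le_trans (_ : 0 < a i lab * t lab) _.
    by rewrite mulr_gt0 ?tp ?alab_pos.
  rewrite /M; apply: ler_wpDr; first by rewrite subr_ge0.
  apply: sumr_ge_one => j; have [->|an] := eqVneq (a i j) 0; first by rewrite mul0r.
  by rewrite mulr_ge0 ?a_ge0 // ltW // tp // lt_def an a_ge0.
have G := @gamgm R _ (a i) (1 - s i) t (a_ge0 i) ltac:(lra) ltac:(rewrite /s; ring) tp M0.
have Mle : vi * M <= dotp p z + (1 - s i) * vi.
  rewrite /M mulrDr mulrC; apply: lerD; last by rewrite mulrC.
  rewrite mulr_suml /dotp; apply: ler_sum => j _.
  have [->|an] := eqVneq (a i j) 0.
    by rewrite !mul0r; apply: mulr_ge0; [exact: ltW | exact: zn].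
  rewrite /t le_eqVlt; apply/orP; left; apply/eqP; field.
  by rewrite an gt_eqF.
have E : expR (\sum_j a i j * ln (t j)) <= M.
  apply: le_trans (_ : _ <= expR (ln M)) _; first by rewrite ler_expR.
  by rewrite lnK ?posrE.
have vE : p (gd i) * prodfun a lam i z = vi * expR (\sum_j a i j * ln (t j)).
  by rewrite -pv (pw z zp) (pw xi xp) tE expRD; ring.
rewrite vE.
have : vi * expR (\sum_j a i j * ln (t j)) <= vi * M by rewrite ler_pM2l.
lra.
Qed.

Lemma hh_opt (p : 'I_m.+1 -> R) (I : R) (x0 : 'I_m.+1 -> R) :
  (forall j, 0 < p j) -> 0 < I -> (forall j, x0 (gd j) = a0 j * I / p (gd j)) ->
  forall z, nonneg z -> dotp p z <= I -> utility a0 z <= utility a0 x0.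
Proof.
move=> pp I0 xE z zn hb.
case: (boolP [exists j, z (gd j) == 0]) => [/existsP [j /eqP zj]|hz].
  rewrite [X in X <= _]/utility (bigD1 j) //= zj powR0 ?gt_eqF ?a0_pos // mul0r.
  exact: utility_ge0.
have zp : forall j, 0 < z (gd j).
  move=> j; rewrite lt_def zn andbT; apply/negP => zj.
  by move/existsP: hz; apply; exists j.
have xp : forall j, 0 < x0 (gd j).
  by move=> j; rewrite xE divr_gt0 ?mulr_gt0 ?a0_pos.
rewrite (util_exp z zp) (util_exp x0 xp) ler_expR.
pose t j := z (gd j) / x0 (gd j).
have tp : forall j, 0 < t j by move=> j; rewrite divr_gt0.
have tE : \sum_j a0 j * ln (z (gd j)) =
    \sum_j a0 j * ln (x0 (gd j)) + \sum_j a0 j * ln (t j).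
  rewrite -big_split; apply: eq_bigr => j _ /=.
  rewrite -mulrDr -lnM ?posrE //; congr (_ * ln _).
  by rewrite /t mulrC divfK ?gt_eqF.
have tS : \sum_j a0 j * t j <= 1.
  have -> : \sum_j a0 j * t j = (\sum_j p (gd j) * z (gd j)) / I.
    rewrite mulr_suml; apply: eq_bigr => j _; rewrite /t xE; field.
    by rewrite !gt_eqF ?a0_pos.
  rewrite ler_pdivrMr // mul1r; apply: le_trans hb; rewrite dotpE lerDr.
  by apply: mulr_ge0; [exact: ltW | exact: zn].
have [j0 _] := some_j.
have M0 : 0 < \sum_j a0 j * t j + 0.
  rewrite addr0; apply: lt_le_trans (_ : 0 < a0 j0 * t j0) _.
    by rewrite mulr_gt0 ?a0_pos.
  by apply: sumr_ge_one => j; rewrite mulr_ge0 // ltW ?a0_pos.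
have G := @gamgm R _ a0 0 t (fun j => ltW (a0_pos j)) (lexx 0)
   ltac:(by rewrite addr0 a0_sum) (fun j _ => tp j) M0.
rewrite addr0 in G; have := ln_le0 tS; rewrite tE; lra.
Qed.

Lemma exist_part : exists p x0 x y, equilibrium a0 a lam p x0 x y.
Proof.
have [w hw] : exists w : 'rV[R]_m, w *m (1%:M - Amx) = \row_j a0 j.
  by exists ((\row_j a0 j) *m invmx (1%:M - Amx)); exact: mulmxKV unitB _.
have wE : forall j, w 0 j = a0 j + \sum_i a i (gd j) * w 0 i.
  move=> j; move: hw; rewrite mulmxBr mulmx1.
  move/rowP/(_ j); rewrite !mxE => <-.
  have -> : \sum_i a i (gd j) * w 0 i = \sum_i w 0 i * Amx i j.
    by apply: eq_bigr => i _; rewrite /Amx mxE mulrC.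
  by rewrite subrK.
have wp : forall j, 0 < w 0 j.
  have w0 : forall j, 0 <= w 0 j.
    apply: (@nonneg_sol (fun i => w 0 i)) => j; rewrite [X in _ <= X]wE lerDr.
    exact: ltW (a0_pos j).
  move=> j; rewrite wE; apply: lt_le_trans (a0_pos j) _; rewrite lerDl.
  by apply: sumr_ge0 => i _; rewrite mulr_ge0 ?a_ge0.
pose L := \sum_i a i lab * w 0 i.
have [j0 _] := some_j.
have L0 : 0 < L.
  apply: lt_le_trans (_ : 0 < a j0 lab * w 0 j0) _; first by rewrite mulr_gt0 ?alab_pos.
  by apply: sumr_ge_one => i; rewrite mulr_ge0 ?ltW ?alab_pos.
have sw : \sum_i (1 - s i) * w 0 i = 1 - L.
  have h1 : \sum_j w 0 j = 1 + \sum_i (s i - a i lab) * w 0 i.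
    under eq_bigr do rewrite wE.
    rewrite big_split /= a0_sum exchange_big /=; congr (_ + _).
    apply: eq_bigr => i _; rewrite -mulr_suml; congr (_ * _).
    by rewrite s_split; ring.
  have h2 : \sum_i (1 - s i) * w 0 i = \sum_j w 0 j - \sum_i (s i - a i lab) * w 0 i - L.
    by rewrite /L -!sumrB; apply: eq_bigr => i _; ring.
  by rewrite h2 h1; ring.
pose v i := w 0 i / L; pose I := L^-1.
have vp : forall i, 0 < v i by move=> i; rewrite divr_gt0.
have I0 : 0 < I by rewrite invr_gt0.
have veq : forall j, v j = a0 j * I + \sum_i a i (gd j) * v i.
  move=> j; rewrite /v wE mulrDl mulr_suml; congr (_ + _).
  by apply: eq_bigr => i _; rewrite mulrA.
have vlab : \sum_i a i lab * v i = 1.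
  rewrite /v; under eq_bigr do rewrite mulrA; rewrite -mulr_suml -/L mulfV ?gt_eqF //.
have vinc : 1 + \sum_i (1 - s i) * v i = I.
  rewrite /v; under eq_bigr do rewrite mulrA; rewrite -mulr_suml sw /I.
  by field; rewrite gt_eqF.
pose logv : 'cV[R]_m := \col_i ln (v i).
pose u : 'cV[R]_m := \col_i (ln (lam i (a i)) + \sum_(j < m.+1) xlnx (a i j)).
pose D : 'M[R]_m := diag_mx (\row_i (s i - 1)).
pose logp := invmx (Amx - 1%:M) *m (u + D *m logv).
have rowE : (Amx - 1%:M) *m logp = u + D *m logv by exact: mulKVmx unitA _.
have rowi : forall i, \sum_j a i (gd j) * logp j 0 - logp i 0 =
    ln (lam i (a i)) + \sum_j xlnx (a i j) + (s i - 1) * ln (v i).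
  move=> i; move/colP: rowE => /(_ i).
  rewrite mulmxBl mul1mx mul_diag_mx !mxE => <-; congr (_ - _).
  by apply: eq_bigr => j _; rewrite AmxE.
pose p := ext 1 (fun i => expR (logp i 0)).
have pp : forall j, 0 < p j.
  by apply: ord_cases; [rewrite /p ext_lab | move=> j; rewrite /p ext_gd expR_gt0].
pose xx := fun i j => a i j * v i / p j.
pose y := fun i => prodfun a lam i (xx i).
have pv : forall i, p (gd i) * y i = v i.
  move=> i; rewrite /y (@ln_prodfun p i (v i) (xx i) pp (vp i) (fun j => erefl)).
  have e2 : \sum_j a i j * ln (p j) = \sum_(j < m) a i (gd j) * logp j 0.
    rewrite big_ord_recl /p ext_lab ln1 mulr0 add0r.
    by apply: eq_bigr => j _; rewrite ext_gd expRK.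
  rewrite e2 {1}/p ext_gd -expRD.
  have h := rowi i.
  have -> : logp i 0 + (ln (lam i (a i)) + \sum_j xlnx (a i j) + s i * ln (v i) -
     \sum_(j < m) a i (gd j) * logp j 0) = ln (v i) by lra.
  by rewrite lnK ?posrE.
have dx : forall i, dotp p (xx i) = s i * v i.
  move=> i; rewrite /dotp /s mulr_suml; apply: eq_bigr => j _; rewrite /xx; field.
  by rewrite gt_eqF.
have prE : forall i, profit p i (y i) (xx i) = (1 - s i) * v i.
  by move=> i; rewrite /profit pv dx; ring.
pose x0 := ext 0 (fun j => a0 j * I / p (gd j)).
have incE : inc p xx y = I.
  rewrite /inc {1}/p ext_lab -vinc; congr (_ + _).
  by apply: eq_bigr => i _; rewrite prE.
exists p, x0, xx, y; split.
- split; first by move=> j; exact: ltW.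
  split.
    apply: ord_cases; first by rewrite /x0 ext_lab.
    move=> j; rewrite /x0 ext_gd; apply: divr_ge0; last exact: ltW.
    by rewrite mulr_ge0 ?ltW ?a0_pos.
  move=> i j; rewrite /xx; apply: divr_ge0; last exact: ltW.
  by rewrite mulr_ge0 ?a_ge0 ?ltW.
- split; first by [].
  move=> i z hz.
  exact: (@firm_opt p i (v i) (xx i) pp (vp i) (fun j => erefl) (pv i) z hz).
- change (dotp p x0 <= inc p xx y /\
    forall z, nonneg z -> dotp p z <= inc p xx y -> utility a0 z <= utility a0 x0).
  rewrite incE; split.
    rewrite dotpE /x0 ext_lab mulr0 add0r.
    have -> : \sum_j p (gd j) * ext 0 (fun j0 => a0 j0 * I / p (gd j0)) (gd j) =
       \sum_j a0 j * I.
      by apply: eq_bigr => j _; rewrite ext_gd; field; rewrite gt_eqF.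
    by rewrite -mulr_suml a0_sum mul1r.
  apply: (@hh_opt p I x0 pp I0) => j.
  by rewrite /x0 ext_gd.
- split.
    rewrite /x0 ext_lab add0r -vlab; apply: eq_bigr => i _.
    by rewrite /xx /p ext_lab divr1.
  move=> j; rewrite /x0 ext_gd.
  have -> : \sum_i xx i (gd j) = (\sum_i a i (gd j) * v i) / p (gd j).
    by rewrite mulr_suml; apply: eq_bigr => i _; rewrite /xx.
  rewrite -mulrDl -veq.
  have := pv j; rewrite mulrC => <-.
  by rewrite mulfK ?gt_eqF.
Qed.

End Econ.

Theorem mainTheorem2 (R : realType) (m k : nat) (sec : 'I_m -> 'I_k)
  (a0 : 'I_m -> R) (a : 'I_m -> 'I_m.+1 -> R) (b0 : 'I_m -> R) (b : 'I_m -> 'I_k -> R)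
  (lam : 'I_m -> ('I_m.+1 -> R) -> R) :
  assumption1 a0 b0 b ->
  admissible sec a b0 b ->
  (forall i, 0 < lam i (a i)) ->
  (* existence *)
  (exists p x0 x y, equilibrium a0 a lam p x0 x y) /\
  (* uniqueness up to price normalization *)
  (forall p x0 x y p' x0' x' y',
     equilibrium a0 a lam p x0 x y -> equilibrium a0 a lam p' x0' x' y' ->
     exists2 c : R, 0 < c &
       [/\ forall j, p' j = c * p j, x0' = x0, x' = x & y' = y]) /\
  (* properties of the equilibrium normalized by p_0 = 1 *)
  (forall p x0 x y, equilibrium a0 a lam p x0 x y -> p lab = 1 ->
     let v := fun i : 'I_m => p (gd i) * y i in
     let eps := fun i : 'I_m => 1 - \sum_(j < m.+1) a i j in
     (* (1) revenues *)
     [/\ (forall j : 'I_m,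
            v j = a0 j + a0 j * \sum_(i < m) eps i * v i + \sum_(i < m) a i (gd j) * v i)
         /\ \sum_(i < m) a i lab * v i = 1,
     (* (2) profits *)
         (forall i : 'I_m,
            profit p i (y i) (x i) = (1 - \sum_(j < m.+1) a i j) * v i
            /\ profit p i (y i) (x i) = (1 - (b0 i + \sum_(l < k) b i l)) * v i) &
     (* (3) prices *)
         let A : 'M[R]_m := \matrix_(i, j) a i (gd j) in
         let u : 'cV[R]_m :=
           \col_i (ln (lam i (a i)) + \sum_(j < m.+1) xlnx (a i j)) in
         let D : 'M[R]_m := diag_mx (\row_i (\sum_(j < m.+1) a i j - 1)) in
         let logp : 'cV[R]_m := \col_i ln (p (gd i)) in
         let logv : 'cV[R]_m := \col_i ln (v i) in
         (A - 1%:M) \in unitmx /\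
         logp = invmx (A - 1%:M) *m u + invmx (A - 1%:M) *m D *m logv]).
Proof.
move=> HA1 HAd Hlam; split.
  exact: (@exist_part R m k sec a0 a b0 b lam HA1 HAd Hlam).
split.
  move=> p x0 x y p' x0' x' y' He He'.
  exact: (@uniq_part R m k sec a0 a b0 b lam HA1 HAd Hlam p x0 x y p' x0' x' y' He He').
move=> p x0 x y He p1.
exact: (@props R m k sec a0 a b0 b lam HA1 HAd Hlam p x0 x y He p1).
Qed.
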